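(* Let $L\colon\mathbb R\times\mathbb R\to\mathbb R$, $(x,\dot x)\mapsto L(x,\dot x)$, be continuously differentiable with $L_x(0,0)=L_{\dot x}(0,0)=0$ and $L(0,\dot x)=0$ for every $\dot x\in\mathbb R$. Consider the problem $$\int_0^1L(x(t),\dot x(t))\,dt\to\min,\quad x(0)=x(1)=0.$$ If the function $\widehat x\equiv0$ delivers a strong local minimum in this problem, then the function $\dot x\mapsto L_x(0,\dot x)$ is linear on $\mathbb R$.
   Context: A strong local minimum means: there is a neighbourhood of $\widehat x$ in the uniform norm on $C([0,1])$ such that the functional at any admissible $x$ (absolutely continuous with $x(0)=x(1)=0$) in that neighbourhood is at least its value at $\widehat x$. *)

(* Defs.v *)
From HB Require Import structures.
From mathcomp Require Import all_boot all_order all_algebra.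
From mathcomp Require Import all_classical all_reals all_analysis.
Set Implicit Arguments. Unset Strict Implicit. Unset Printing Implicit Defensive.
Import Order.TTheory GRing.Theory Num.Theory.
Import numFieldNormedType.Exports.
Local Open Scope classical_set_scope.
Local Open Scope ring_scope.

Definition abs_continuous_on {R : realType} (a b : R) (f : R -> R) : Prop :=
  forall e : R, 0 < e -> exists2 d : R, 0 < d &
    forall (n : nat) (u w : 'I_n -> R),
      (forall i, a <= u i /\ u i <= w i /\ w i <= b) ->
      (forall i j, i != j -> w i <= u j \/ w j <= u i) ->
      \sum_(i < n) (w i - u i) < d ->
      \sum_(i < n) `|f (w i) - f (u i)| < e.

Definition ae_derivative_01 {R : realType} (x v : R -> R) : Prop :=
  {ae (@lebesgue_measure R), forall t : R, t \in `[0%R, 1%R] -> is_derive t 1 x (v t)}.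

Definition Jfun {R : realType} (L : R -> R -> R) (x v : R -> R) : R :=
  Rintegral (@lebesgue_measure R) `[0%R, 1%R] (fun t => L (x t) (v t)).

(* Admissible functions: absolutely continuous on [0,1], x(0)=x(1)=0,
   with a.e. derivative v, and t |-> L(x t, v t) Lebesgue integrable on [0,1]
   (so that the functional is defined). *)
Definition admissible {R : realType} (L : R -> R -> R) (x v : R -> R) : Prop :=
  [/\ abs_continuous_on 0 1 x, x 0 = 0, x 1 = 0, ae_derivative_01 x v &
      (@lebesgue_measure R).-integrable `[0%R, 1%R] (fun t => (L (x t) (v t))%:E)].

Definition strong_local_min_zero {R : realType} (L : R -> R -> R) : Prop :=
  exists2 delta : R, 0 < delta &
    forall x v : R -> R, admissible L x v ->
      (forall t : R, t \in `[0%R, 1%R] -> `|x t| < delta) ->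
      Jfun L (fun _ => 0) (fun _ => 0) <= Jfun L x v.

(* Main.v *)
Require Import Defs.
From HB Require Import structures.
From mathcomp Require Import all_boot all_order all_algebra.
From mathcomp Require Import all_classical all_reals all_analysis.
From mathcomp Require Import ring lra.
Import Order.TTheory GRing.Theory Num.Theory.
Import numFieldNormedType.Exports.
Local Open Scope classical_set_scope.
Local Open Scope ring_scope.

Lemma der_cont (R : realType) (f : R -> R) (x : R) : derivable f x 1 -> {for x, continuous f}.
Proof.
move=> /derivable1_diffP H. exact: differentiable_continuous.
Qed.
Lemma lin_derive (R : realType) (al be t : R) :
  is_derive t 1 (fun t : R => al * t + be / 2 * (t * t)) (al + be * t).
Proof.
have H : is_derive t 1 (fun t : R => al * t + be / 2 * (t * t)) (al * 1 + be / 2 * (t * 1 + t * 1)).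
  by apply: is_deriveD.
by move: H; congr is_derive; field.
Qed.

Lemma lin_cont (R : realType) (al be : R) : continuous (fun t : R => al + be * t).
Proof.
move=> t; apply: der_cont.
have H : is_derive t 1 (fun t : R => al + be * t) (0 + be * 1) by apply: is_deriveD.
exact: ex_derive.
Qed.

Lemma int_lin (R : realType) (a b al be : R) : a < b ->
  \int[@lebesgue_measure R]_(t in `[a, b]) (al + be * t) =
  (al * b + be / 2 * (b * b)) - (al * a + be / 2 * (a * a)).
Proof.
move=> ab.
pose F := fun t : R => al * t + be / 2 * (t * t).
have dF : forall t : R, is_derive t 1 F (al + be * t) by move=> t; exact: lin_derive.
have cF : continuous F by move=> t; apply: der_cont; by case: (dF t).
rewrite /Rintegral (@continuous_FTC2 _ _ F) //=.
- apply: continuous_in_subspaceT => x _; exact: lin_cont.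
- split.
  + by move=> x _; case: (dF x).
  + by apply: cvg_at_right_filter; exact: cF.
  + by apply: cvg_at_left_filter; exact: cF.
- by move=> x _; rewrite derive1E; case: (dF x).
Qed.
Lemma loc_est (R : realType) (g : R -> R) (l : R) : is_derive (0:R) 1 g l -> g 0 = 0 ->
  forall eta : R, 0 < eta -> exists2 rho : R, 0 < rho &
    forall z : R, `|z| < rho -> g z <= l * z + eta * `|z|.
Proof.
move=> H g0 eta e0.
have [G [HG cG G0]] := (is_derive1_caratheodory g 0 l).1 H.
move: cG => /cvgrPdist_lt /(_ eta e0) /nbhs_normP [rho rho0 Hr].
exists rho => // z hz.
have := Hr z; rewrite /= sub0r normrN => /(_ hz).
rewrite G0 => hG.
have := HG z; rewrite g0 !subr0 => ->.
have : (G z - l) * z <= `|G z - l| * `|z|.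
  by rewrite -normrM ler_norm.
have : `|G z - l| * `|z| <= eta * `|z|.
  by apply: ler_wpM2r => //; rewrite distrC ltW.
move=> h1 h2. rewrite mulrBl in h2. lra.
Qed.

Set Implicit Arguments. Unset Strict Implicit.
Lemma glue (R : realType) (f : R -> R) (a c M : R) :
  (forall u w, a <= u -> u <= w -> w <= c -> `|f w - f u| <= M * (w - u)) ->
  (forall u w, c <= u -> u <= w -> `|f w - f u| <= M * (w - u)) ->
  forall u w, a <= u -> u <= w -> `|f w - f u| <= M * (w - u).
Proof.
move=> H1 H2 u w au uw.
have [wc|cw] := leP w c; first exact: H1.
have [cu|uc] := leP c u; first exact: H2.
have e1 := H1 u c au (ltW uc) (lexx c).
have e2 := H2 c w (lexx c) (ltW cw).
have : `|f w - f u| <= `|f w - f c| + `|f c - f u|.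
  by rewrite (_ : f w - f u = (f w - f c) + (f c - f u)) ?ler_normD //; ring.
move=> h; apply: (le_trans h); rewrite (_ : M * (w - u) = M * (w - c) + M * (c - u)); last by ring.
exact: lerD.
Qed.

Definition xb (R : realType) (p q s : R) (t : R) : R :=
  if t <= s then p * t else if t <= s + p * s / q then q * (s + p * s / q - t) else 0.
Definition vb (R : realType) (p q s : R) (t : R) : R :=
  if t <= s then p else if t <= s + p * s / q then - q else 0.

Lemma xb_lip (R : realType) (p q s : R) : 0 < p * q -> 0 < s ->
  forall u w, 0 <= u -> u <= w -> `|xb p q s w - xb p q s u| <= (`|p| + `|q|) * (w - u).
Proof.
move=> pq s0.
have q0 : q != 0 by apply/eqP => q0; move: pq; rewrite q0 mulr0 ltxx.
have p0 : p != 0 by apply/eqP => p0; move: pq; rewrite p0 mul0r ltxx.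
set r := p * s / q.
have r0 : 0 < r by rewrite /r -(mulrC s) -mulrA mulr_gt0 // (_ : p / q = p * q / q^+2); [rewrite divr_gt0 // exprn_even_gt0 | field].
have qr : q * r = p * s by rewrite /r; field.
apply: (glue (c := s)).
- move=> u w _ uw ws; rewrite /xb (le_trans uw ws) ws -mulrBr normrM (ger0_norm (_ : 0 <= w - u)); last by lra.
  apply: ler_wpM2r; [lra | rewrite lerDl //].
- apply: (glue (c := s + r)).
  + move=> u w su uw wsr.
    have Hx : forall t, s <= t -> t <= s + r -> xb p q s t = q * (s + r - t).
      move=> t st tsr; rewrite /xb -/r; have [ts|ts] := leP t s.
        have -> : t = s by apply/eqP; rewrite eq_le ts st.
        by rewrite -qr; congr (_ * _); ring.
      by rewrite tsr.
    rewrite (Hx w) ?(Hx u); try lra.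
    rewrite (_ : q * (s + r - w) - q * (s + r - u) = - q * (w - u)); last by ring.
    rewrite normrM normrN (ger0_norm (_ : 0 <= w - u)); last by lra.
    apply: ler_wpM2r; [lra | rewrite lerDr //].
  + move=> u w sru uw.
    have Hx : forall t, s + r <= t -> xb p q s t = 0.
      move=> t srt; rewrite /xb -/r.
      have [ts|ts] := leP t s; first lra.
      have [tsr|tsr] := leP t (s + r); last by [].
      have -> : t = s + r by apply/eqP; rewrite eq_le tsr srt.
      by rewrite subrr mulr0.
    rewrite (Hx w) ?(Hx u); try lra.
    rewrite subrr normr0; apply: mulr_ge0; [apply: addr_ge0 | lra]; exact: normr_ge0.
Qed.

Lemma lip_ac (R : realType) (f : R -> R) (M : R) : 0 < M ->
  (forall u w, 0 <= u -> u <= w -> `|f w - f u| <= M * (w - u)) ->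
  abs_continuous_on 0 1 f.
Proof.
move=> M0 H e e0; exists (e / M); first exact: divr_gt0.
move=> n u w Hi _ Hs.
apply: (@le_lt_trans _ _ (\sum_(i < n) M * (w i - u i))).
  apply: ler_sum => i _; have [h1 [h2 h3]] := Hi i; exact: H.
rewrite -mulr_sumr.
have -> : e = M * (e / M) by field; exact: lt0r_neq0.
by rewrite ltr_pM2l.
Qed.
Lemma d1 (R : realType) (p t : R) : is_derive t 1 (fun y : R => p * y) p.
Proof.
have H : is_derive t 1 (fun y : R => p * y + 0) (p * 1 + 0) by apply: is_deriveD.
by move: H; rewrite mulr1 addr0; congr is_derive; apply: funext => y; rewrite addr0.
Qed.
Lemma d2 (R : realType) (q c t : R) : is_derive t 1 (fun y : R => q * (c - y)) (- q).
Proof.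
have H : is_derive t 1 (fun y : R => q * c + (- q) * y) (0 + (- q) * 1) by apply: is_deriveD.
by move: H; rewrite mulr1 add0r; congr is_derive; apply: funext => y; ring.
Qed.
Lemma d0 (R : realType) (t : R) : is_derive t 1 (fun y : R => (0:R)) (0:R).
Proof. by have := d1 0 t; congr is_derive; apply: funext => y; rewrite mul0r. Qed.
Lemma near_lt (R : realType) (t c : R) : t < c -> \forall y \near t, y < c.
Proof.
move=> tc; apply/nbhs_normP; exists (c - t); first by simpl; lra.
move=> y /=; have := ler_norm (y - t); rewrite distrC; lra.
Qed.
Lemma near_gt (R : realType) (t c : R) : c < t -> \forall y \near t, c < y.
Proof.
move=> tc; apply/nbhs_normP; exists (t - c); first by simpl; lra.
move=> y /=; have := ler_norm (t - y); lra.
Qed.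

Lemma xb_ae (R : realType) (p q s : R) : 0 < p * q -> 0 < s ->
  ae_derivative_01 (xb p q s) (vb p q s).
Proof.
move=> pq s0.
have q0 : q != 0 by apply/eqP => q0; move: pq; rewrite q0 mulr0 ltxx.
have r0 : 0 < p * s / q by rewrite -(mulrC s) -mulrA mulr_gt0 // (_ : p / q = p * q / q^+2); [rewrite divr_gt0 // exprn_even_gt0 | field].
rewrite /ae_derivative_01.
rewrite nearE /= /almost_everywhere.
have HN : (@lebesgue_measure R).-negligible ([set s] `|` [set s + p * s / q]).
  apply: negligibleU; apply/negligibleP => //; exact: lebesgue_measure_set1.
apply: (negligibleS _ HN).
  move=> t /= nP; apply: contrapT => ht; apply: nP => _.
  have ts : t != s by apply/eqP => e; apply: ht; left.
  have tsr : t != s + p * s / q by apply/eqP => e; apply: ht; right.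
  set r := p * s / q in r0 ts tsr *.
  have [lts|lts] := ltP t s.
    rewrite /vb /= ltW //.
    apply: (@near_eq_is_derive _ _ _ (fun y => p * y)); last exact: d1.
    near=> y; rewrite /xb ltW //; near: y; exact: near_lt.
  have {}lts : s < t by rewrite lt_neqAle eq_sym ts.
  have [ltsr|ltsr] := ltP t (s + r).
    rewrite /vb /= (ltW ltsr) leNgt lts /=.
    apply: (@near_eq_is_derive _ _ _ (fun y => q * (s + r - y))); last exact: d2.
    near=> y; rewrite /xb -/r.
    have -> : (y <= s) = false by apply/negbTE; rewrite -ltNge; near: y; exact: near_gt.
    rewrite ltW //; near: y; exact: near_lt.
  have {}ltsr : s + r < t by rewrite lt_neqAle eq_sym tsr.
  rewrite /vb /= -/r leNgt lts /= leNgt ltsr /=.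
  apply: (@near_eq_is_derive _ _ _ (fun y => (0:R))).
  near=> y; rewrite /xb -/r.
  have -> : (y <= s) = false.
    apply/negbTE; rewrite -ltNge; apply: (lt_trans _ (_ : s + r < y)); first lra.
    near: y; exact: near_gt.
  have -> : (y <= s + r) = false by apply/negbTE; rewrite -ltNge; near: y; exact: near_gt.
  by [].
Unshelve. all: by end_near.
Qed.
Lemma cont_int (R : realType) (f : R -> R) (a b : R) : continuous f ->
  (@lebesgue_measure R).-integrable `[a, b] (EFin \o f).
Proof.
move=> cf; apply: continuous_compact_integrable; first exact: segment_compact.
by apply: continuous_in_subspaceT => x _; exact: cf.
Qed.
Lemma in_setitv (R : realType) (i : interval R) (t : R) : (t \in [set` i]) = (t \in i).
Proof. by apply/idP/idP => [/set_mem|/mem_set]. Qed.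

Lemma cont_lin_comp (R : realType) (L : R -> R -> R) (al be w : R) :
  (forall a b : R, derivable (fun y => L y b) a 1) ->
  continuous (fun t : R => L (al + be * t) w).
Proof.
move=> hL t.
apply: (@continuous_comp _ _ _ (fun t => al + be * t) (fun y => L y w)).
  exact: lin_cont.
exact: der_cont.
Qed.

Lemma xb_int (R : realType) (L : R -> R -> R) (p q s : R) :
  (forall a b : R, derivable (fun y => L y b) a 1) -> L 0 0 = 0 ->
  0 < p * q -> 0 < s -> s + p * s / q <= 1 ->
  (@lebesgue_measure R).-integrable `[0, 1] (EFin \o (fun t => L (xb p q s t) (vb p q s t))).
Proof.
move=> hL hL0 pq s0 sr1.
have q0 : q != 0 by apply/eqP => q0; move: pq; rewrite q0 mulr0 ltxx.
have r0 : 0 < p * s / q by rewrite -(mulrC s) -mulrA mulr_gt0 // (_ : p / q = p * q / q^+2); [rewrite divr_gt0 // exprn_even_gt0 | field].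
set r := p * s / q in r0 sr1 *.
have cG1 : continuous (fun t : R => L (0 + p * t) p) by exact: cont_lin_comp.
have cG2 : continuous (fun t : R => L (q * (s + r) + (- q) * t) (- q)) by exact: cont_lin_comp.
apply/(integrable_mkcond _ _).2 => //.
have -> : (EFin \o (fun t => L (xb p q s t) (vb p q s t))) \_ `[0, 1] =
   (EFin \o (fun t : R => L (0 + p * t) p)) \_ `[0, s] \+
   (EFin \o (fun t : R => L (q * (s + r) + (- q) * t) (- q))) \_ `]s, s + r].
  apply: funext => t; rewrite /= !patchE !in_setitv !in_itv /= /xb /vb -/r.
  have e1 : 0 + p * t = p * t by ring.
  have e2 : q * (s + r) + (- q) * t = q * (s + r - t) by ring.
  rewrite e1 e2.
  case: (leP t s) => ts; case: (leP t (s + r)) => tsr; case: (leP 0 t) => t0; case: (leP t 1) => t1 /=;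
    rewrite ?adde0 ?add0e ?hL0 //; try (exfalso; lra).
apply: integrableD => //.
- apply/(integrable_mkcond _ _).1 => //; exact: cont_int.
- apply/(integrable_mkcond _ _).1 => //.
  apply: integrableS (cont_int s (s + r) cG2) => //; exact: subset_itv_oc_cc.
Qed.

Lemma xb_J (R : realType) (L : R -> R -> R) (p q s c1 c2 : R) :
  (forall a b : R, derivable (fun y => L y b) a 1) -> L 0 0 = 0 ->
  0 < p * q -> 0 < s -> s + p * s / q <= 1 ->
  (forall t, 0 <= t -> t <= s -> L (p * t) p <= c1 * t) ->
  (forall t, s < t -> t <= s + p * s / q -> L (q * (s + p * s / q - t)) (- q) <= c2 * (s + p * s / q - t)) ->
  Jfun L (xb p q s) (vb p q s) <= c1 * (s * s) / 2 + c2 * ((p * s / q) * (p * s / q)) / 2.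
Proof.
move=> hL hL0 pq s0 sr1 H1 H2.
have iF := xb_int hL hL0 pq s0 sr1.
have q0 : q != 0 by apply/eqP => q0; move: pq; rewrite q0 mulr0 ltxx.
have r0 : 0 < p * s / q by rewrite -(mulrC s) -mulrA mulr_gt0 // (_ : p / q = p * q / q^+2); [rewrite divr_gt0 // exprn_even_gt0 | field].
set r := p * s / q in r0 sr1 H2 iF *.
have s1 : s <= 1 by lra.
have ssr : s <= s + r by lra.
have ssr' : s < s + r by lra.
set F := fun t => L (xb p q s t) (vb p q s t) in iF *.
rewrite /Jfun -/F.
have e1 := @Rintegral_itvB R F (BLeft 0) (BRight 1) s iF.
rewrite !bnd_simp in e1. have {e1} e1 := e1 (ltW s0) ltac:(lra).
have iF2 : (@lebesgue_measure R).-integrable `]s, 1] (EFin \o F).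
  apply: integrableS iF => //; apply: subset_itvr; rewrite bnd_simp; exact: ltW.
have e2 := @Rintegral_itvB R F (BRight s) (BRight 1) (s + r) iF2.
rewrite !bnd_simp in e2. have {e2} e2 := e2 ltac:(lra) sr1.
have e3 : \int[@lebesgue_measure R]_(t in `]s + r, 1]) F t = 0.
  rewrite (@eq_Rintegral _ _ _ _ _ (fun _ => 0)); first by rewrite Rintegral_cst // mul0r.
  move=> t; rewrite in_setitv in_itv /= => /andP[ht1 ht2].
  rewrite /F /xb /vb -/r.
  have -> : (t <= s) = false by apply/negbTE; rewrite -ltNge; exact: (lt_trans ssr' ht1).
  have -> : (t <= s + r) = false by apply/negbTE; rewrite -ltNge.
  exact: hL0.
have b1 : \int[@lebesgue_measure R]_(t in `[0, s]) F t <=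
          \int[@lebesgue_measure R]_(t in `[0, s]) (0 + c1 * t).
  apply: le_Rintegral => //.
  - by apply: integrableS iF => //; apply: subset_itvl; rewrite bnd_simp.
  - by apply: cont_int; exact: lin_cont.
  - move=> t /=; rewrite in_itv /= => /andP[ht1 ht2].
    rewrite /F /xb /vb ht2 add0r; exact: H1.
have b2 : \int[@lebesgue_measure R]_(t in `]s, s + r]) F t <=
          \int[@lebesgue_measure R]_(t in `]s, s + r]) (c2 * (s + r) + (- c2) * t).
  apply: le_Rintegral => //.
  - by apply: integrableS iF2 => //; apply: subset_itvl; rewrite bnd_simp.
  - apply: integrableS (cont_int s (s + r) (@lin_cont R (c2 * (s + r)) (- c2))) => //; exact: subset_itv_oc_cc.
  - move=> t /=; rewrite in_itv /= => /andP[ht1 ht2].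
    rewrite /F /xb /vb -/r ht2.
    have -> : (t <= s) = false by apply/negbTE; rewrite -ltNge.
    rewrite (_ : c2 * (s + r) + - c2 * t = c2 * (s + r - t)); last by ring.
    exact: H2.
rewrite (@Rintegral_itv_obnd_cbnd R s (BRight (s + r)) (fun t => c2 * (s + r) + (- c2) * t)) in b2; last first.
  apply: integrableS (cont_int s (s + r) (@lin_cont R (c2 * (s + r)) (- c2))) => //; exact: subset_itv_oc_cc.
rewrite int_lin // in b1.
rewrite int_lin in b2 => //.
have -> : \int[@lebesgue_measure R]_(t in `[0, 1]) F t =
  \int[@lebesgue_measure R]_(t in `[0, s]) F t + \int[@lebesgue_measure R]_(t in `]s, s + r]) F t.
  rewrite -(subrK (\int[@lebesgue_measure R]_(t in `[0, s]) F t) (\int[@lebesgue_measure R]_(t in `[0, 1]) F t)) e1.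
  rewrite -(subrK (\int[@lebesgue_measure R]_(t in `]s, s + r]) F t) (\int[@lebesgue_measure R]_(t in `]s, 1]) F t)) e2 e3.
  by rewrite add0r addrC.
have -> : c1 * (s * s) / 2 + c2 * (r * r) / 2 =
  (0 * s + c1 / 2 * (s * s) - (0 * 0 + c1 / 2 * (0 * 0))) +
  (c2 * (s + r) * (s + r) + - c2 / 2 * ((s + r) * (s + r)) - (c2 * (s + r) * s + - c2 / 2 * (s * s))).
  by field.
exact: lerD.
Qed.

Lemma xb_bound (R : realType) (p q s t : R) : 0 < p * q -> 0 < s -> 0 <= t ->
  `|xb p q s t| <= `|p| * s.
Proof.
move=> pq s0 t0.
have q0 : q != 0 by apply/eqP => q0; move: pq; rewrite q0 mulr0 ltxx.
have r0 : 0 < p * s / q by rewrite -(mulrC s) -mulrA mulr_gt0 // (_ : p / q = p * q / q^+2); [rewrite divr_gt0 // exprn_even_gt0 | field].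
set r := p * s / q in r0 *.
have qr : q * r = p * s by rewrite /r; field.
rewrite /xb -/r.
case: (leP t s) => ts.
  by rewrite normrM (ger0_norm t0) ler_wpM2l.
case: (leP t (s + r)) => tsr; last by rewrite normr0 mulr_ge0 // ltW.
rewrite normrM (ger0_norm (_ : 0 <= s + r - t)); last by lra.
have -> : `|p| * s = `|q| * r.
  by rewrite -{1}(ger0_norm (ltW s0)) -normrM -qr normrM (ger0_norm (ltW r0)).
apply: ler_wpM2l => //; lra.
Qed.

Lemma key (R : realType) (L Lx : R -> R -> R) :
  (forall a b : R, is_derive a 1 (fun y => L y b) (Lx a b)) ->
  (forall w : R, L 0 w = 0) ->
  strong_local_min_zero L ->
  forall p q : R, 0 < p * q -> 0 <= Lx 0 p / p + Lx 0 (- q) / q.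
Proof.
move=> hd hL0w [delta d0 hmin] p q pq.
have hL : forall a b : R, derivable (fun y => L y b) a 1 by move=> a b; case: (hd a b).
have hL0 := hL0w 0.
have q0 : q != 0 by apply/eqP => q0; move: pq; rewrite q0 mulr0 ltxx.
have p0 : p != 0 by apply/eqP => p0; move: pq; rewrite p0 mul0r ltxx.
have pq' : 0 < p / q by rewrite (_ : p / q = p * q / q^+2); [rewrite divr_gt0 // exprn_even_gt0 | field].
have J0 : Jfun L (fun _ => 0) (fun _ => 0) = 0 by rewrite /Jfun hL0 Rintegral_cst // mul0r.
rewrite leNgt; apply/negP => K0.
set A := Lx 0 p / p in K0.
set B := Lx 0 (- q) / q in K0.
pose a : R := `|p|. pose b : R := `|q|.
have a0 : 0 < a by rewrite normr_gt0.
have b0 : 0 < b by rewrite normr_gt0.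
pose eta : R := - (A + B) / (2 * (a^-1 + b^-1)).
have eta0 : 0 < eta.
  apply: divr_gt0; first lra.
  by apply: mulr_gt0 => //; apply: addr_gt0; rewrite invr_gt0.
have [rho1 rho10 Hr1] := @loc_est R _ _ (hd 0 p) (hL0w p) eta eta0.
have [rho2 rho20 Hr2] := @loc_est R _ _ (hd 0 (- q)) (hL0w (- q)) eta eta0.
pose m : R := Num.min (Num.min rho1 rho2) (Num.min delta 1).
have m0 : 0 < m by rewrite !lt_min rho10 rho20 d0 ltr01.
have m1 : m <= rho1 by rewrite !ge_min lexx.
have m2 : m <= rho2 by rewrite !ge_min lexx orbT.
have m3 : m <= delta by rewrite !ge_min lexx !orbT.
have m4 : m <= 1 by rewrite !ge_min lexx !orbT.
pose D : R := 2 * (1 + a + p / q).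
have D0 : 0 < D by rewrite /D; clear -a0 pq'; lra.
pose s : R := m / D.
have s0 : 0 < s by exact: divr_gt0.
have mD : m = s * D by rewrite /s divfK // lt0r_neq0.
have as_m : a * s < m.
  rewrite mD /D; have : 0 < s * (2 + a + 2 * (p / q)) by apply: mulr_gt0 => //; lra.
  lra.
pose r : R := p * s / q.
have r_eq : r = s * (p / q) by rewrite /r mulrA (mulrC p).
have r0 : 0 < r by rewrite r_eq; exact: mulr_gt0.
have sr1 : s + p * s / q <= 1.
  rewrite -/r r_eq; suff : s + s * (p / q) <= m by lra.
  rewrite mD /D; have : 0 <= s * (1 + 2 * a + p / q) by apply: mulr_ge0; lra.
  lra.
pose c1 := p * Lx 0 p + eta * a.
pose c2 := q * Lx 0 (- q) + eta * b.
have H1 : forall t, 0 <= t -> t <= s -> L (p * t) p <= c1 * t.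
  move=> t t0 ts.
  have ht : `|p * t| < rho1.
    rewrite normrM (ger0_norm t0) -/a; apply: le_lt_trans (_ : a * s < rho1); first by rewrite ler_wpM2l // ltW.
    lra.
  apply: le_trans (Hr1 _ ht) _.
  by rewrite normrM (ger0_norm t0) /c1 -/a; rewrite le_eqVlt; apply/orP; left; apply/eqP; ring.
have H2 : forall t, s < t -> t <= s + p * s / q ->
    L (q * (s + p * s / q - t)) (- q) <= c2 * (s + p * s / q - t).
  move=> t st tsr; rewrite -/r in tsr *.
  have u0 : 0 <= s + r - t by lra.
  have ht : `|q * (s + r - t)| < rho2.
    have := xb_bound pq s0 (ltW (lt_trans s0 st)).
    rewrite /xb -/r (leNgt t s) st tsr /= -/a => h.
    by apply: le_lt_trans h _; lra.
  apply: le_trans (Hr2 _ ht) _.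
  by rewrite normrM (ger0_norm u0) /c2 -/b; rewrite le_eqVlt; apply/orP; left; apply/eqP; ring.
have Jb := xb_J hL hL0 pq s0 sr1 H1 H2.
have adm : admissible L (xb p q s) (vb p q s).
  split.
  - apply: (@lip_ac _ _ (a + b)); first lra.
    exact: xb_lip.
  - by rewrite /xb (ltW s0) mulr0.
  - have sr1' : s + r <= 1 by exact: sr1.
    rewrite /xb -/r; case: (leP 1 s) => [h|_]; first by exfalso; clear -h sr1' r0; lra.
    case: (leP 1 (s + r)) => h //.
    have -> : s + r - 1 = 0 by clear -h sr1'; lra.
    by rewrite mulr0.
  - exact: xb_ae.
  - exact: xb_int.
have hx : forall t : R, t \in `[0%R, 1%R] -> `|xb p q s t| < delta.
  move=> t; rewrite in_itv /= => /andP[t0 _].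
  apply: le_lt_trans (xb_bound pq s0 t0) _; rewrite -/a; clear -as_m m3; lra.
have := hmin _ _ adm hx; rewrite J0 => J1.
have := le_trans J1 Jb.
apply/negP; rewrite -ltNge.
have hA : Lx 0 p = A * p by rewrite /A divfK.
have hB : Lx 0 (- q) = B * q by rewrite /B divfK.
have pa : a * a = p * p.
  rewrite /a -normrM ger0_norm //; rewrite -expr2; exact: sqr_ge0.
have qb : b * b = q * q.
  rewrite /b -normrM ger0_norm //; rewrite -expr2; exact: sqr_ge0.
have rr : p * s / q * (p * s / q) = p * p * (s * s) / (q * q) by field.
rewrite rr -pa -qb /c1 /c2 hA hB.
have e1 : p * (A * p) = A * (p * p) by ring.
have e2 : q * (B * q) = B * (q * q) by ring.
rewrite e1 e2 -pa -qb.
have an : a != 0 by exact: lt0r_neq0.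
have bn : b != 0 by exact: lt0r_neq0.
have abn : a^-1 + b^-1 != 0.
  by apply: lt0r_neq0; apply: addr_gt0; rewrite invr_gt0.
have -> : (A * (a * a) + eta * a) * (s * s) / 2 +
          (B * (b * b) + eta * b) * (a * a * (s * s) / (b * b)) / 2 =
          (A + B) * (a * a * (s * s)) / 4.
  by rewrite /eta; field; rewrite an bn /=; apply: lt0r_neq0; apply: addr_gt0.
have Y0 : 0 < a * a * (s * s) by apply: mulr_gt0; apply: mulr_gt0.
rewrite pmulr_llt0 ?invr_gt0 // nmulr_rlt0 //.
Qed.

Unset Implicit Arguments. Set Strict Implicit.

Theorem mainTheorem3 (R : realType) (L Lx Lv : R -> R -> R) :
  (* L is C^1 on R x R: partial derivatives Lx, Lv exist everywhere and are
     jointly continuous *)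
  (forall a b : R, is_derive a 1 (fun y => L y b) (Lx a b)) ->
  (forall a b : R, is_derive b 1 (fun z => L a z) (Lv a b)) ->
  continuous (fun p : R * R => Lx p.1 p.2) ->
  continuous (fun p : R * R => Lv p.1 p.2) ->
  Lx 0 0 = 0 -> Lv 0 0 = 0 ->
  (forall w : R, L 0 w = 0) ->
  strong_local_min_zero L ->
  exists c : R, forall w : R, Lx 0 w = c * w.
Proof.
move=> hd _ _ _ Lx00 _ hL0w hmin.
have K := key hd hL0w hmin.
exists (Lx 0 1) => w.
have K5 := K 1 1 ltac:(by rewrite mulr1).
have K6 := K (-1) (-1) ltac:(by rewrite mulrNN mulr1).
rewrite opprK !divr1 invrN invr1 !mulrN1 in K5 K6.
case: (ltgtP w 0) => hw.
- have K1 := K 1 (- w) ltac:(by rewrite mul1r oppr_gt0).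
  have K2 := K w (- 1) ltac:(by rewrite mulrN1 oppr_gt0).
  rewrite !opprK divr1 invrN mulrN in K1.
  rewrite opprK invrN invr1 mulrN1 in K2.
  have wn : w != 0 by rewrite lt_eqF.
  rewrite -(divfK wn (Lx 0 w)); congr (_ * _); lra.
- have K3 := K w 1 ltac:(by rewrite mulr1).
  have K4 := K (- 1) (- w) ltac:(by rewrite mulN1r opprK).
  rewrite divr1 in K3.
  rewrite !opprK invrN invr1 mulrN1 invrN mulrN in K4.
  have wn : w != 0 by rewrite gt_eqF.
  rewrite -(divfK wn (Lx 0 w)); congr (_ * _); lra.
- by rewrite hw Lx00 mulr0.
Qed.
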